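(* Let $r\in\mathcal{Q}'(1)$ and suppose $r$ contains a pure term, i.e. a monomial $z^k$ or $\overline z^k$ with $k\ge1$ and nonzero coefficient. Then $r(0,0)>0$.
   Context: $\mathcal{Q}'(1)$: Hermitian symmetric polynomials $r(z,\overline z)=\sum c_{jk}z^j\overline z^k$ ($c_{jk}=\overline{c_{kj}}$) in one complex variable with $r(z,\overline z)\ge0$ for all $z$ for which there exist a Hermitian symmetric polynomial $s\ge0$, not identically $0$, and a holomorphic polynomial mapping $F$ with $rs=\|F\|^2$. *)

(* Defs.v *)
From HB Require Import structures.
From mathcomp Require Import all_boot all_order all_algebra.
From mathcomp Require Import complex.
From mathcomp Require Import reals.
Set Implicit Arguments. Unset Strict Implicit. Unset Printing Implicit Defensive.
Import Order.TTheory GRing.Theory Num.Theory.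
Local Open Scope ring_scope.

Definition hpoly_eval (R : realType) (n : nat) (c : 'M[R[i]]_n) (z : R[i]) : R[i] :=
  \sum_(j < n) \sum_(k < n) c j k * z ^+ j * (z^*)%C ^+ k.

Definition hermitian (R : realType) (n : nat) (c : 'M[R[i]]_n) : Prop :=
  forall j k : 'I_n, c j k = (c k j)^*%C.

Definition hpoly_nonneg (R : realType) (n : nat) (c : 'M[R[i]]_n) : Prop :=
  forall z : R[i], 0 <= hpoly_eval c z.

Definition sqnorm_map (R : realType) (N : nat) (F : 'I_N -> {poly R[i]}) (z : R[i]) : R[i] :=
  \sum_(l < N) `|(F l).[z]| ^+ 2.

Definition in_Qprime1 (R : realType) (n : nat) (c : 'M[R[i]]_n) : Prop :=
  hermitian c /\ hpoly_nonneg c /\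
  exists (m : nat) (d : 'M[R[i]]_m) (N : nat) (F : 'I_N -> {poly R[i]}),
    [/\ hermitian d, hpoly_nonneg d, (exists z, hpoly_eval d z != 0) &
        forall z, hpoly_eval c z * hpoly_eval d z = sqnorm_map F z].

Definition has_pure_term (R : realType) (n : nat) (c : 'M[R[i]]_n) : Prop :=
  exists (k : 'I_n) (i0 : 'I_n), (0 < k)%N /\ val i0 = 0%N /\
    (c k i0 != 0 \/ c i0 k != 0).

(* r(0,0) = c_{00} (zero if n = 0). *)
Definition hpoly_at0 (R : realType) (n : nat) (c : 'M[R[i]]_n) : R[i] :=
  hpoly_eval c 0.

(* Main.v *)
From Pilot Require Import Defs.
From HB Require Import structures.
From mathcomp Require Import all_boot all_order all_algebra.
From mathcomp Require Import complex reals.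
From mathcomp Require Import ring zify.
Import Order.TTheory GRing.Theory Num.Theory.
Local Open Scope ring_scope.

Lemma poly_inf_roots (R : realType) (p : {poly R[i]}) (g : nat -> R[i]) :
  injective g -> (forall x, p.[g x] = 0) -> p = 0.
Proof.
move=> gi H; apply: (@roots_geq_poly_eq0 _ p (map g (iota 0 (size p)))).
- by apply/allP => x /mapP [y _ ->]; rewrite /root H.
- by rewrite map_inj_uniq // iota_uniq.
- by rewrite size_map size_iota.
Qed.

Lemma pick2 (R : realType) n (F : 'I_n -> 'I_n -> R[i]) (a0 b0 : 'I_n) :
  \sum_(a < n) \sum_(b < n) F a b * ((val a0 == val a) && (val b0 == val b))%:R
  = F a0 b0.
Proof.
rewrite (bigD1 a0) //= (bigD1 b0) //= !eqxx mulr1 big1 ?addr0; last first.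
  by move=> b nb; rewrite val_eqE eq_sym (negbTE nb) andbF mulr0.
rewrite big1 ?addr0 // => a na; rewrite big1 // => b _.
by rewrite val_eqE eq_sym (negbTE na) mulr0.
Qed.

Lemma conj_i (R : realType) : ('i%C : R[i])^*%C = - 'i%C.
Proof. by apply/eqP; rewrite eq_complex /= oppr0 !eqxx. Qed.

Lemma sqr_iC (R : realType) : ('i%C : R[i]) ^+ 2 = -1.
Proof. exact: sqr_i. Qed.

Lemma natpi_neq0 (R : realType) (x : nat) : (x%:R + 'i%C : R[i]) != 0.
Proof.
apply/negP => /eqP H.
have : (x%:R + 'i%C) * (x%:R - 'i%C) = ((x * x + 1)%:R : R[i]).
  rewrite natrD natrM; have := sqr_iC R; rewrite expr2 => Hi.
  transitivity (x%:R * x%:R - 'i%C * 'i%C : R[i]); first by ring.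
  by rewrite Hi opprK.
by rewrite H mul0r => /eqP; rewrite eq_sym pnatr_eq0 addn1.
Qed.

Lemma natmi_neq0 (R : realType) (x : nat) : (x%:R - 'i%C : R[i]) != 0.
Proof.
apply/negP => /eqP H.
have : (x%:R + 'i%C) * (x%:R - 'i%C) = ((x * x + 1)%:R : R[i]).
  rewrite natrD natrM; have := sqr_iC R; rewrite expr2 => Hi.
  transitivity (x%:R * x%:R - 'i%C * 'i%C : R[i]); first by ring.
  by rewrite Hi opprK.
by rewrite H mulr0 => /eqP; rewrite eq_sym pnatr_eq0 addn1.
Qed.

Definition upt (R : realType) (x : nat) : R[i] := (x%:R + 'i%C) / (x%:R - 'i%C).

Lemma upt_unit (R : realType) x : upt R x * (upt R x)^*%C = 1.
Proof.
rewrite /upt rmorphM fmorphV rmorphD rmorphB !rmorph_nat.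
have Hc : forall y : R[i], complex_conjc__canonical__GRing_RMorphism R y = conjc y by [].
rewrite Hc conj_i opprK.
have h1 := natpi_neq0 R x; have h2 := natmi_neq0 R x.
by rewrite mulf_div [(_ - _) * _]mulrC divff // mulf_neq0.
Qed.

Lemma upt_inj (R : realType) : injective (upt R).
Proof.
move=> x y /eqP; rewrite /upt eqr_div ?natmi_neq0 // => /eqP H.
have : (2%:R * 'i%C * (y%:R - x%:R) : R[i]) = 0.
  transitivity ((x%:R + 'i%C) * (y%:R - 'i%C) - (y%:R + 'i%C) * (x%:R - 'i%C) : R[i]).
    by ring.
  by rewrite H subrr.
move/eqP; rewrite !mulf_eq0 pnatr_eq0 /= subr_eq0 eqr_nat.
have -> : ('i%C : R[i]) == 0 = false.
  by apply/negP => /eqP [] /eqP; rewrite oner_eq0.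
by move=> /eqP.
Qed.

Lemma conjE (R : realType) (y : R[i]) :
  complex_conjc__canonical__GRing_RMorphism R y = conjc y.
Proof. by []. Qed.

Definition ev2 (R : realType) (B : nat) (a : nat -> nat -> R[i]) (z : R[i]) : R[i] :=
  \sum_(j < B) \sum_(k < B) a j k * z ^+ j * (z^*)%C ^+ k.
Arguments ev2 {R}.

Lemma ident_step1 (R : realType) (B : nat) (a : nat -> nat -> R[i]) (u : R[i]) :
  (forall z, ev2 B a z = 0) -> u * u^*%C = 1 ->
  forall p, \sum_(j < B) \sum_(k < B)
     a j k * u ^+ j * (u^*%C) ^+ k * ((p == j + k)%N)%:R = 0.
Proof.
move=> H hu p.
pose T : {poly R[i]} := \sum_(j < B) \sum_(k < B)
   (a j k * u ^+ j * (u^*%C) ^+ k) *: 'X^(j + k).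
have T0 : T = 0.
  apply: (@poly_inf_roots R T (fun t => t%:R)).
    by move=> x y /eqP; rewrite eqr_nat => /eqP.
  move=> t; rewrite -(H (t%:R * u)) /T /ev2 horner_sum; apply: eq_bigr => j _.
  rewrite horner_sum; apply: eq_bigr => k _.
  rewrite hornerZ hornerXn rmorphM rmorph_nat conjE exprMn exprMn exprD.
  ring.
have := congr1 (fun q : {poly R[i]} => q`_p) T0; rewrite coef0 /T coef_sum => e.
rewrite -[RHS]e; apply: eq_bigr => j _; rewrite coef_sum; apply: eq_bigr => k _.
by rewrite coefZ coefXn.
Qed.

Lemma ident (R : realType) (B : nat) (a : nat -> nat -> R[i]) : (forall z, ev2 B a z = 0) ->
  forall j k, (j < B)%N -> (k < B)%N -> a j k = 0.
Proof.
move=> H j0 k0 hj hk.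
pose p := (j0 + k0)%N.
pose Q : {poly R[i]} := \sum_(j < B) \sum_(k < B)
   (a j k * ((p == j + k)%N)%:R) *: 'X^(j + j).
have Q0 : Q = 0.
  apply: (@poly_inf_roots R Q (upt R)); first exact: upt_inj.
  move=> x; have hu := upt_unit R x.
  have S := @ident_step1 R B a (upt R x) H hu p.
  rewrite -[RHS](mulr0 (upt R x ^+ p)) -S mulr_sumr /Q horner_sum.
  apply: eq_bigr => j _; rewrite mulr_sumr horner_sum; apply: eq_bigr => k _.
  rewrite hornerZ hornerXn.
  case: eqP => [->|_]; last by rewrite !mulr0 mul0r.
  have e : upt R x ^+ k * (upt R x)^*%C ^+ k = 1 by rewrite -exprMn hu expr1n.
  rewrite !mulr1 !exprD.
  transitivity (a j k * upt R x ^+ j * upt R x ^+ j *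
     (upt R x ^+ k * (upt R x)^*%C ^+ k)); first by rewrite e mulr1; ring.
  ring.
have := congr1 (fun q : {poly R[i]} => q`_(j0 + j0)%N) Q0; rewrite coef0 /Q coef_sum.
have -> : \sum_(j < B) (\sum_(k < B) (a j k * ((p == j + k)%N)%:R) *: 'X^(j + j))`_(j0 + j0)
  = \sum_(j < B) \sum_(k < B) (fun (j k : 'I_B) => a j k) j k *
     ((val (Ordinal hj) == val j) && (val (Ordinal hk) == val k))%:R.
  apply: eq_bigr => j _; rewrite coef_sum; apply: eq_bigr => k _.
  rewrite coefZ coefXn -mulrA -natrM mulnb /=.
  have -> : ((p == j + k)%N && (j0 + j0 == j + j)%N) = ((j0 == j) && (k0 == k)).
    rewrite /p; apply/andP/andP => [[/eqP h1 /eqP h2]|[/eqP h1 /eqP h2]];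
      split; apply/eqP; lia.
  by [].
by rewrite pick2.
Qed.

Definition P2 (R : realType) (n : nat) (c : 'M[R[i]]_n) : {poly {poly R[i]}} :=
  \sum_(j < n) \sum_(k < n) (c j k *: 'X^j)%:P * 'X^k.
Arguments P2 {R n}.

Definition eval2 (R : realType) (P : {poly {poly R[i]}}) (z : R[i]) : R[i] :=
  (map_poly (horner_eval z) P).[z^*%C].
Arguments eval2 {R}.

Lemma eval2_mulsub (R : realType) (P Q M : {poly {poly R[i]}}) z :
  eval2 (P * Q - M) z = eval2 P z * eval2 Q z - eval2 M z.
Proof. by rewrite /eval2 rmorphB rmorphM /= hornerD hornerN hornerM. Qed.

Lemma P2_coef (R : realType) n (c : 'M[R[i]]_n) j0 k0 :
  (P2 c)`_k0`_j0 = \sum_(a < n) \sum_(b < n) c a b * ((j0 == a) && (k0 == b))%:R.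
Proof.
rewrite /P2 !coef_sum; apply: eq_bigr => a _; rewrite !coef_sum; apply: eq_bigr => b _.
rewrite coefCM coefXn; case: (k0 == b).
  by rewrite andbT mulr1n mulr1 coefZ coefXn.
by rewrite andbF mulr0 coef0 mulr0.
Qed.

Lemma P2_ord (R : realType) n (c : 'M[R[i]]_n) (a0 b0 : 'I_n) :
  (P2 c)`_b0`_a0 = c a0 b0.
Proof. by rewrite P2_coef pick2. Qed.

Lemma P2_herm (R : realType) n (c : 'M[R[i]]_n) : Pilot.Defs.hermitian c ->
  forall j k, (P2 c)`_k`_j = ((P2 c)`_j`_k)^*%C.
Proof.
move=> H j k; rewrite !P2_coef -conjE rmorph_sum exchange_big /=.
apply: eq_bigr => a _; rewrite rmorph_sum; apply: eq_bigr => b _.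
by rewrite rmorphM rmorph_nat !conjE -H andbC.
Qed.

Lemma eval2_P2 (R : realType) n (c : 'M[R[i]]_n) z : eval2 (P2 c) z = hpoly_eval c z.
Proof.
rewrite /eval2 /P2 rmorph_sum horner_sum /hpoly_eval; apply: eq_bigr => j _.
rewrite rmorph_sum horner_sum; apply: eq_bigr => k _.
by rewrite rmorphM /= map_polyC map_polyXn hornerCM hornerXn /= horner_evalE hornerZ hornerXn.
Qed.

Lemma eval2_0 (R : realType) (P : {poly {poly R[i]}}) : eval2 P 0 = P`_0`_0.
Proof.
by rewrite /eval2 conjc0 horner_coef0 coef_map /= horner_evalE horner_coef0.
Qed.

Definition M2 (R : realType) N (F : 'I_N -> {poly R[i]}) : {poly {poly R[i]}} :=
  \sum_(l < N) (F l)%:P * (map_poly conjc (F l))^:P.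
Arguments M2 {R N}.

Lemma eval2_M2 (R : realType) N (F : 'I_N -> {poly R[i]}) z :
  eval2 (M2 F) z = sqnorm_map F z.
Proof.
rewrite /eval2 /M2 rmorph_sum horner_sum /sqnorm_map; apply: eq_bigr => l _.
rewrite rmorphM /= map_polyC /= -map_poly_comp.
rewrite (eq_map_poly (g := id)); last by move=> x /=; rewrite horner_evalE hornerC.
by rewrite map_poly_id // hornerCM horner_map /= sqr_normc.
Qed.

Lemma M2_coef (R : realType) N (F : 'I_N -> {poly R[i]}) j k :
  (M2 F)`_k`_j = \sum_(l < N) (F l)`_j * ((F l)`_k)^*%C.
Proof.
rewrite /M2 !coef_sum; apply: eq_bigr => l _.
by rewrite coefCM coef_map /= coef_map /= coefMC.
Qed.

Lemma eval2_ident (R : realType) (P : {poly {poly R[i]}}) :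
  (forall z, eval2 P z = 0) -> P = 0.
Proof.
move=> H.
pose B := (size P + \sum_(k < size P) size ((P`_k)%R))%N.
have hB1 : (size P <= B)%N by apply: leq_addr.
have hB2 : forall k, (size ((P`_k)%R) <= B)%N.
  move=> k; case: (ltnP k (size P)) => hk.
    rewrite /B (bigD1 (Ordinal hk)) //=; lia.
  by rewrite nth_default // size_poly0.
have hm : forall z, (size (map_poly (horner_eval z) P) <= B)%N.
  by move=> z; apply: leq_trans (size_poly _ _) hB1.
have ev : forall z, eval2 P z = ev2 B (fun j k => P`_k`_j) z.
  move=> z; rewrite /eval2 (horner_coef_wide _ (hm z)).
  rewrite /ev2 exchange_big /=; apply: eq_bigr => k _.
  rewrite coef_map /= horner_evalE (horner_coef_wide _ (hB2 k)) mulr_suml.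
  by apply: eq_bigr.
have I := @ident R B (fun j k => P`_k`_j) (fun z => etrans (esym (ev z)) (H z)).
apply/polyP => k; apply/polyP => j; rewrite coef0 coef0.
case: (ltnP k B) => hk.
  2: have -> : P`_k = 0 by apply: nth_default; apply: leq_trans hB1 hk.
  2: by rewrite coef0.
case: (ltnP j B) => hj; last by apply: nth_default; apply: leq_trans (hB2 k) hj.
exact: I.
Qed.

Theorem corollary4p1 (R : realType) (n : nat) (c : 'M[R[i]]_n) :
  in_Qprime1 c -> has_pure_term c -> 0 < hpoly_at0 c.
Proof.
case=> hc [hnn [m [d [N [F [hd hdnn [z0 hz0] hid]]]]]] [k [i0 [hk [hi0 hpure]]]].
have E : P2 c * P2 d = M2 F.
  apply/eqP; rewrite -subr_eq0; apply/eqP; apply: eval2_ident => z.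
  by rewrite eval2_mulsub !eval2_P2 eval2_M2 hid subrr.
have at0 : hpoly_at0 c = (P2 c)`_0`_0 by rewrite /hpoly_at0 -eval2_P2 eval2_0.
rewrite at0 lt0r.
have -> : 0 <= (P2 c)`_0`_0 by rewrite -at0; exact: hnn.
rewrite andbT; apply/negP => /eqP r00.
have R0 : (P2 c)`_0 != 0.
  apply/negP => /eqP h.
  have e := @P2_ord R n c k i0; rewrite hi0 h coef0 in e.
  case: hpure => hp; first by rewrite -e eqxx in hp.
  by move: hp; rewrite -conjc_eq0 -hc -e eqxx.
have S0 : P2 d != 0.
  apply/negP => /eqP h; move: hz0; rewrite -eval2_P2 h /eval2 rmorph0 horner0 eqxx.
  by [].
have ex : exists m0, (P2 d)`_m0 != 0.
  by exists (size (P2 d)).-1; rewrite -lead_coefE lead_coef_eq0.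
case: (ex_minnP ex) => m0 hm0 hmin.
have low : forall j, (j < m0)%N -> (P2 d)`_j = 0.
  move=> j hj; apply/eqP/negPn/negP => /hmin; rewrite leqNgt hj.
  by [].
have lowj : forall j, (j < m0)%N -> (P2 d)`_m0`_j = 0.
  by move=> j hj; rewrite P2_herm // low // coef0 conjc0.
have Mm : (M2 F)`_m0 = (P2 c)`_0 * (P2 d)`_m0.
  rewrite -E coefM big_ord_recl /= subn0 big1 ?addr0 // => i _.
  rewrite low ?mulr0 //; have := ltn_ord i; rewrite /bump leq0n add1n; lia.
have Mmm : (M2 F)`_m0`_m0 = 0.
  rewrite Mm coefM big1 // => i _.
  case: (eqVneq (val i) 0%N) => [h0|hn0]; first by rewrite h0 r00 mul0r.
  rewrite lowj ?mulr0 //; move: hn0; case: i => /= i hi; lia.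
have Fm : forall l, (F l)`_m0 = 0.
  move=> l; move: Mmm; rewrite M2_coef => Hs.
  have := psumr_eq0P (P := predT) (fun l _ => mulcJ_ge0 ((F l)`_m0)) Hs; move=> /(_ l isT).
  by move/eqP; rewrite mulf_eq0 conjc_eq0 orbb => /eqP.
have M0 : (M2 F)`_m0 = 0.
  apply/polyP => j; rewrite M2_coef coef0 big1 // => l _.
  by rewrite Fm conjc0 mulr0.
by move: Mm; rewrite M0 => /esym/eqP; rewrite mulf_eq0 (negbTE R0) (negbTE hm0).
Qed.
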